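(* Let $T_{init}$ be the number of nodes of the initial tree. The expected optimization time of SMO-GP-single and of SMO-GP-multi on MO-MAJORITY is $O(n\,T_{init}+n^2\log n)$.
   Context: Fix an integer $n\ge 1$; the terminal set is $T=\{x_1,\bar x_1,\dots,x_n,\bar x_n\}$ ($\bar x_i$ the complement of $x_i$). A syntax tree is either the empty tree or a rooted ordered binary tree whose inner nodes are all labelled by the binary function $J$ (join, exactly two ordered children) and whose leaves are labelled by elements of $T$. The complexity $C(X)$ is the number of nodes of $X$ (0 for the empty tree). The leaf list $l$ of $X$ is the sequence of leaf labels in inorder. MAJORITY$(X)$ is the number of indices $i$ such that $x_i$ occurs in $l$ at least once and at least as often as $\bar x_i$. MO-MAJORITY$(X)=(\mathrm{MAJORITY}(X),C(X))$, MAJORITY maximized, $C$ minimized. Mutation (HVL-Prime applied $k$ times): each application chooses uniformly at random one of three operations. Substitute: replace a uniformly random leaf by a uniformly random $u\in T$. Insert: choose a uniformly random node $v$ and uniformly random $u\in T$, replace $v$ by a $J$-node with children $u$ and $v$ in uniformly random order (inserting into the empty tree yields the single leaf $u$). Delete: choose a uniformly random leaf $v$ with parent $p$ and sibling $u$, replace $p$ by $u$ (deleting $p$ and $v$; deleting the only leaf of a one-leaf tree yields the empty tree). For single-operation mutation $k=1$; for multi-operation mutation $k=1+\mathrm{Pois}(1)$ with $\mathrm{Pois}(1)$ Poisson with mean 1. Dominance for MO-$F$: $Y\succeq X$ iff $F(Y)\ge F(X)$ and $C(Y)\le C(X)$; $Y\succ X$ iff $Y\succeq X$ and ($F(Y)>F(X)$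 or $C(Y)<C(X)$). A tree is Pareto optimal if no tree dominates it; the Pareto front is the set of objective vectors of Pareto optimal trees. SMO-GP: choose an initial tree $X$ and set $P:=\{X\}$; repeat: choose $X\in P$ uniformly at random, let $Y$ be a mutated copy of $X$; if no $Z\in P$ satisfies $Z\succ Y$, set $P:=(P\setminus\{Z\in P: Y\succeq Z\})\cup\{Y\}$. SMO-GP-single uses single-operation, SMO-GP-multi multi-operation mutation. Expected optimization time: expected number of iterations until the population contains, for every objective vector in the Pareto front, a tree with that objective vector. *)

(* Defs.v *)
From Stdlib Require Import Bool Reals List Arith ClassicalEpsilon.
Import ListNotations.
Open Scope R_scope.
Open Scope bool_scope.

(** Literals: [Lit i true] is x_i, [Lit i false] is the complement of x_i;
    variables are numbered 1..n. *)
Record lit := Lit { var : nat; pos : bool }.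

Inductive tree := Leaf (l : lit) | Join (a b : tree).

(** A syntax tree: [None] is the empty tree. *)
Definition stree := option tree.

Fixpoint size_t (t : tree) : nat :=
  match t with Leaf _ => 1%nat | Join a b => S (size_t a + size_t b) end.

Definition complexity (X : stree) : nat := match X with None => 0%nat | Some t => size_t t end.

Fixpoint leaves (t : tree) : list lit :=
  match t with Leaf l => [l] | Join a b => leaves a ++ leaves b end.

Definition leaf_list (X : stree) : list lit :=
  match X with None => [] | Some t => leaves t end.

Fixpoint nleaves (t : tree) : nat :=
  match t with Leaf _ => 1%nat | Join a b => (nleaves a + nleaves b)%nat end.

Definition Tset (n : nat) : list lit :=
  flat_map (fun i => [Lit i true; Lit i false]) (seq 1 n).

Definition wf (n : nat) (X : stree) : Prop :=
  Forall (fun l => (1 <= var l <= n)%nat) (leaf_list X).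

Definition count_lit (i : nat) (b : bool) (l : list lit) : nat :=
  length (filter (fun x => andb (Nat.eqb (var x) i) (Bool.eqb (pos x) b)) l).

Definition MAJORITY (n : nat) (X : stree) : nat :=
  let l := leaf_list X in
  length (filter (fun i => (Nat.leb 1 (count_lit i true l)
                            && Nat.leb (count_lit i false l) (count_lit i true l))%bool)
                 (seq 1 n)).

Definition wdom (n : nat) (Y X : stree) : bool :=
  (Nat.leb (MAJORITY n X) (MAJORITY n Y) && Nat.leb (complexity Y) (complexity X))%bool.
Definition sdom (n : nat) (Y X : stree) : bool :=
  (wdom n Y X && (Nat.ltb (MAJORITY n X) (MAJORITY n Y) || Nat.ltb (complexity Y) (complexity X)))%bool.

Definition pareto_opt (n : nat) (Y : stree) : Prop :=
  ~ exists Z, wf n Z /\ sdom n Z Y = true.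

Definition covers_front (n : nat) (P : list stree) : Prop :=
  forall Y, wf n Y -> pareto_opt n Y ->
    exists Z, In Z P /\ MAJORITY n Z = MAJORITY n Y /\ complexity Z = complexity Y.

Definition covers_frontb (n : nat) (P : list stree) : bool :=
  if excluded_middle_informative (covers_front n P) then true else false.

Definition dist (A : Type) := list (R * A).
Definition ret {A} (a : A) : dist A := [(1, a)].
Definition uniform {A} (l : list A) : dist A :=
  map (fun x => (/ INR (length l), x)) l.
Definition bind {A B} (d : dist A) (f : A -> dist B) : dist B :=
  flat_map (fun wa => map (fun wb => (fst wa * fst wb, snd wb)) (f (snd wa))) d.
Definition scale {A} (c : R) (d : dist A) : dist A :=
  map (fun wa => (c * fst wa, snd wa)) d.
Definition expect {A} (d : dist A) (f : A -> R) : R :=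
  fold_right (fun wa acc => fst wa * f (snd wa) + acc) 0 d.

(** replace the i-th leaf (inorder, 0-based) by u *)
Fixpoint subst_at (t : tree) (i : nat) (u : lit) : tree :=
  match t with
  | Leaf _ => Leaf u
  | Join a b => if Nat.ltb i (nleaves a) then Join (subst_at a i u) b
                else Join a (subst_at b (i - nleaves a) u)
  end.

(** replace the i-th node (preorder, 0-based) v by J(u,v) if [ul], else J(v,u) *)
Fixpoint insert_at (t : tree) (i : nat) (u : lit) (ul : bool) : tree :=
  match i with
  | O => if ul then Join (Leaf u) t else Join t (Leaf u)
  | S j => match t with
           | Leaf _ => t
           | Join a b => if Nat.ltb j (size_t a) then Join (insert_at a j u ul) b
                         else Join a (insert_at b (j - size_t a) u ul)
           end
  end.

(** delete the i-th leaf (inorder): its parent is replaced by its sibling;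
    deleting the only leaf yields the empty tree *)
Fixpoint delete_at (t : tree) (i : nat) : stree :=
  match t with
  | Leaf _ => None
  | Join a b =>
      if Nat.ltb i (nleaves a) then
        match delete_at a i with None => Some b | Some a' => Some (Join a' b) end
      else
        match delete_at b (i - nleaves a) with None => Some a | Some b' => Some (Join a b') end
  end.

Definition op_subst (n : nat) (X : stree) : dist stree :=
  match X with
  | None => ret None
  | Some t => bind (uniform (seq 0 (nleaves t))) (fun i =>
              bind (uniform (Tset n)) (fun u => ret (Some (subst_at t i u))))
  end.

Definition op_insert (n : nat) (X : stree) : dist stree :=
  match X with
  | None => bind (uniform (Tset n)) (fun u => ret (Some (Leaf u)))
  | Some t => bind (uniform (seq 0 (size_t t))) (fun i =>
              bind (uniform (Tset n)) (fun u =>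
              bind (uniform [true; false]) (fun ul => ret (Some (insert_at t i u ul)))))
  end.

Definition op_delete (X : stree) : dist stree :=
  match X with
  | None => ret None
  | Some t => bind (uniform (seq 0 (nleaves t))) (fun i => ret (delete_at t i))
  end.

Definition hvl (n : nat) (X : stree) : dist stree :=
  scale (/ 3) (op_subst n X) ++ scale (/ 3) (op_insert n X) ++ scale (/ 3) (op_delete X).

Fixpoint hvl_iter (n k : nat) (X : stree) : dist stree :=
  match k with O => ret X | S k' => bind (hvl n X) (hvl_iter n k') end.

Definition mut_single (n : nat) : stree -> dist stree := hvl n.

(** Multi-operation mutation, truncated to Pois(1) values < K
    (the mass of the event Pois(1) >= K is dropped). *)
Definition mut_multi_trunc (n K : nat) (X : stree) : dist stree :=
  flat_map (fun j => scale (exp (-1) / INR (fact j)) (hvl_iter n (S j) X)) (seq 0 K).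

Definition update (n : nat) (P : list stree) (Y : stree) : list stree :=
  if existsb (fun Z => sdom n Z Y) P then P
  else Y :: filter (fun Z => negb (wdom n Y Z)) P.

(** [not_done mut n t P] = probability that, starting from population P,
    the populations after 0,1,...,t iterations all fail to cover the
    Pareto front (i.e. P(T > t) where T is the optimization time),
    for mutation kernel [mut].  For a truncated kernel this is the
    probability of that event intersected with "no truncated value was drawn". *)
Fixpoint not_done (mut : stree -> dist stree) (n t : nat) (P : list stree) : R :=
  if covers_frontb n P then 0
  else match t with
       | O => 1
       | S t' => expect (bind (uniform P) mut) (fun Y => not_done mut n t' (update n P Y))
       end.

Definition sumR (N : nat) (f : nat -> R) : R :=
  fold_right (fun t acc => f t + acc) 0 (seq 0 N).

(* Main.v *)
Require Import Defs.
From Stdlib Require Import Reals List Arith ClassicalEpsilon Lia Lra Permutation Classical.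
Import ListNotations.

Open Scope R_scope.

Definition nnd {A} (d : Defs.dist A) : Prop := Forall (fun wa => 0 <= fst wa) d.
Definition mass {A} (d : Defs.dist A) : R := expect d (fun _ => 1).
Definition sumf {A} (l : list A) (f : A -> R) : R := fold_right (fun x acc => f x + acc) 0 l.

Lemma expect_app {A} (d1 d2 : Defs.dist A) f : expect (d1 ++ d2) f = expect d1 f + expect d2 f.
Proof. induction d1 as [|[w a] d IH]; simpl; [lra|rewrite IH; lra]. Qed.

Lemma expect_scale {A} c (d : Defs.dist A) f : expect (scale c d) f = c * expect d f.
Proof. induction d as [|[w a] d IH]; simpl in *; [lra|rewrite IH; lra]. Qed.

Lemma expect_mapw {A} w (d : Defs.dist A) f :
  expect (map (fun wb => (w * fst wb, snd wb)) d) f = w * expect d f.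
Proof. induction d as [|[v a] d IH]; simpl in *; [lra|rewrite IH; lra]. Qed.

Lemma expect_bind {A B} (d : Defs.dist A) (k : A -> Defs.dist B) f :
  expect (bind d k) f = expect d (fun a => expect (k a) f).
Proof.
  induction d as [|[w a] d IH]; simpl; [lra|].
  rewrite expect_app, expect_mapw, IH. simpl. lra.
Qed.

Lemma expect_ret {A} (a : A) f : expect (ret a) f = f a.
Proof. unfold ret; simpl; lra. Qed.

Lemma expect_uniform {A} (l : list A) f : expect (uniform l) f = / INR (length l) * sumf l f.
Proof.
  unfold uniform. generalize (/ INR (length l)). intro c.
  induction l as [|x l IH]; simpl; [lra|]. rewrite IH. simpl. lra.
Qed.

Lemma expect_ext {A} (d : Defs.dist A) f g : (forall a, f a = g a) -> expect d f = expect d g.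
Proof. intro H; induction d as [|[w a] d IH]; simpl; [lra|rewrite IH, H; lra]. Qed.

Lemma expect_mono {A} (d : Defs.dist A) f g : nnd d -> (forall a, f a <= g a) -> expect d f <= expect d g.
Proof.
  intros Hn H; induction d as [|[w a] d IH]; simpl; [lra|].
  inversion Hn; subst. simpl in *. specialize (IH H3). specialize (H a). nra.
Qed.

Lemma expect_nonneg {A} (d : Defs.dist A) f : nnd d -> (forall a, 0 <= f a) -> 0 <= expect d f.
Proof.
  intros Hn H; induction d as [|[w a] d IH]; simpl; [lra|].
  inversion Hn; subst. simpl in *. specialize (IH H3). specialize (H a). nra.
Qed.

Lemma expect_lin {A} (d : Defs.dist A) c e f :
  expect d (fun a => c - e * f a) = c * mass d - e * expect d f.
Proof. unfold mass; induction d as [|[w a] d IH]; simpl; [lra|rewrite IH; simpl; lra]. Qed.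

Lemma expect_plus {A} (d : Defs.dist A) f g :
  expect d (fun a => f a + g a) = expect d f + expect d g.
Proof. induction d as [|[w a] d IH]; simpl; [lra|rewrite IH; lra]. Qed.

Lemma expect_zero {A} (d : Defs.dist A) : expect d (fun _ => 0) = 0.
Proof. induction d as [|[w a] d IH]; simpl; [lra|rewrite IH; lra]. Qed.

Lemma nonneg_app {A} (d1 d2 : Defs.dist A) : nnd d1 -> nnd d2 -> nnd (d1 ++ d2).
Proof. intros; apply Forall_app; auto. Qed.
Lemma nonneg_scale {A} c (d : Defs.dist A) : 0 <= c -> nnd d -> nnd (scale c d).
Proof.
  intros Hc H; unfold scale, nnd in *; apply Forall_map.
  eapply Forall_impl; [|exact H]. intros [w a]; simpl; nra.
Qed.
Lemma nonneg_ret {A} (a : A) : nnd (ret a).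
Proof. constructor; simpl; [lra|constructor]. Qed.
Lemma nonneg_uniform {A} (l : list A) : nnd (uniform l).
Proof.
  unfold nnd, uniform. apply Forall_map. apply Forall_forall. intros. simpl.
  destruct (length l). rewrite ?INR_0, Rinv_0; lra.
  left; apply Rinv_0_lt_compat, lt_0_INR; lia.
Qed.
Lemma nonneg_bind {A B} (d : Defs.dist A) (k : A -> Defs.dist B) :
  nnd d -> (forall a, nnd (k a)) -> nnd (bind d k).
Proof.
  intros Hd Hk; induction d as [|[w a] d IH]; simpl; [constructor|].
  inversion Hd; subst. apply Forall_app; split; [|apply IH; auto].
  apply Forall_map. eapply Forall_impl; [|apply (Hk a)]. intros [v b]; simpl in *. nra.
Qed.

Lemma sumf_cons {A} (x:A) l f : sumf (x::l) f = f x + sumf l f.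
Proof. reflexivity. Qed.
Lemma sumf_nil {A} (f : A -> R) : sumf [] f = 0.
Proof. reflexivity. Qed.

Lemma sumf_ge_count {A} (l : list A) (b : A -> bool) f :
  (forall x, 0 <= f x) -> (forall x, b x = true -> 1 <= f x) ->
  INR (length (filter b l)) <= sumf l f.
Proof.
  intros H0 H1; induction l as [|x l IH]; simpl; [lra|].
  destruct (b x) eqn:E; simpl length; [rewrite S_INR; specialize (H1 x E)|specialize (H0 x)]; lra.
Qed.

Lemma sumf_ge_all {A} (l : list A) f c :
  (forall x, In x l -> c <= f x) -> INR (length l) * c <= sumf l f.
Proof.
  induction l as [|x l IH]; intro H; rewrite ?sumf_cons, ?sumf_nil; simpl length; [rewrite INR_0; lra|].
  rewrite S_INR. assert (c <= f x) by (apply H; left; auto).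
  assert (INR (length l) * c <= sumf l f) by (apply IH; intros; apply H; right; auto). lra.
Qed.

Lemma sumf_ge_one {A} (l : list A) f z :
  (forall x, 0 <= f x) -> In z l -> f z <= sumf l f.
Proof.
  intros H0; induction l as [|x l IH]; intro Hz; simpl; [destruct Hz|].
  destruct Hz as [->|Hz].
  - assert (0 <= sumf l f) by (clear IH; induction l; simpl; [lra| specialize (H0 a); lra]). lra.
  - specialize (IH Hz). specialize (H0 x). lra.
Qed.

Lemma unif_count {A} (l : list A) (b : A -> bool) f :
  (forall x, 0 <= f x) -> (forall x, b x = true -> 1 <= f x) ->
  INR (length (filter b l)) * / INR (length l) <= expect (uniform l) f.
Proof.
  intros H0 H1. rewrite expect_uniform.
  pose proof (sumf_ge_count l b f H0 H1).
  destruct (length l) eqn:E.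
  - rewrite ?INR_0, Rinv_0. lra.
  - assert (0 < / INR (S n)) by (apply Rinv_0_lt_compat, lt_0_INR; lia). nra.
Qed.

Lemma unif_all {A} (l : list A) f c :
  l <> [] -> (forall x, In x l -> c <= f x) -> c <= expect (uniform l) f.
Proof.
  intros Hl H. rewrite expect_uniform. pose proof (sumf_ge_all l f c H).
  destruct l; [congruence|]. simpl length in *.
  assert (0 < INR (S (length l))) by (apply lt_0_INR; lia).
  apply (Rmult_le_reg_l (INR (S (length l)))); auto.
  rewrite <- Rmult_assoc, Rinv_r by lra. lra.
Qed.

Lemma unif_one {A} (l : list A) f z :
  (forall x, 0 <= f x) -> In z l -> f z * / INR (length l) <= expect (uniform l) f.
Proof.
  intros H0 Hz. rewrite expect_uniform. pose proof (sumf_ge_one l f z H0 Hz).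
  destruct l; [destruct Hz|]. simpl length in *.
  assert (0 < / INR (S (length l))) by (apply Rinv_0_lt_compat, lt_0_INR; lia). nra.
Qed.

Lemma mass_uniform {A} (l : list A) : mass (uniform l) <= 1.
Proof.
  unfold mass. rewrite expect_uniform.
  assert (sumf l (fun _ => 1) = INR (length l)) by (induction l; rewrite ?sumf_cons, ?sumf_nil; simpl length; [auto|rewrite IHl, S_INR; lra]).
  rewrite H. destruct (length l). rewrite ?INR_0, Rinv_0; lra.
  rewrite Rinv_l; [lra|]. apply not_0_INR; lia.
Qed.

Lemma mass_ret {A} (a : A) : mass (ret a) = 1.
Proof. unfold mass; rewrite expect_ret; auto. Qed.

Lemma mass_bind {A B} (d : Defs.dist A) (k : A -> Defs.dist B) :
  nnd d -> mass d <= 1 -> (forall a, mass (k a) <= 1) -> mass (bind d k) <= 1.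
Proof.
  intros Hn Hd Hk. unfold mass in *. rewrite expect_bind.
  eapply Rle_trans; [|exact Hd]. apply expect_mono; auto.
Qed.

Close Scope R_scope.

Definition majp (l : list lit) (i : nat) : bool :=
  (Nat.leb 1 (count_lit i true l) && Nat.leb (count_lit i false l) (count_lit i true l))%bool.
Definition MAJl (n : nat) (l : list lit) : nat := length (filter (majp l) (seq 1 n)).

Lemma MAJ_l n X : MAJORITY n X = MAJl n (leaf_list X).
Proof. reflexivity. Qed.

Lemma count_perm i b l1 l2 : Permutation l1 l2 -> count_lit i b l1 = count_lit i b l2.
Proof.
  unfold count_lit. induction 1; simpl; auto.
  - destruct (_ && _)%bool; simpl; auto.
  - destruct (_ && _)%bool; destruct (_ && _)%bool; simpl; auto.
  - congruence.
Qed.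

Lemma MAJl_perm n l1 l2 : Permutation l1 l2 -> MAJl n l1 = MAJl n l2.
Proof.
  intro H. unfold MAJl. f_equal. apply filter_ext. intro i. unfold majp.
  rewrite !(count_perm i _ l1 l2 H). auto.
Qed.

Lemma MAJl_le_n n l : (MAJl n l <= n)%nat.
Proof. unfold MAJl. rewrite <- (length_seq n 1) at 2. apply filter_length_le. Qed.

Lemma count_pos_in i l : (1 <= count_lit i true l)%nat -> In i (map var l).
Proof.
  unfold count_lit. induction l as [|x l IH]; simpl; [lia|].
  destruct (Nat.eqb (var x) i && Bool.eqb (Defs.pos x) true)%bool eqn:E; simpl.
  - apply andb_prop in E as [E _]. apply Nat.eqb_eq in E. auto.
  - intro; right; auto.
Qed.

Lemma MAJl_le_len n l : (MAJl n l <= length l)%nat.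
Proof.
  unfold MAJl. rewrite <- (length_map var l).
  apply NoDup_incl_length.
  - apply NoDup_filter, seq_NoDup.
  - intros i Hi. apply filter_In in Hi as [_ Hi]. unfold majp in Hi.
    apply andb_prop in Hi as [Hi _]. apply Nat.leb_le in Hi. apply count_pos_in; auto.
Qed.

Lemma filter_incr (s : list nat) (p q : nat -> bool) (i : nat) :
  (forall x, In x s -> p x = true -> q x = true) -> In i s -> p i = false -> q i = true ->
  (S (length (filter p s)) <= length (filter q s))%nat.
Proof.
  induction s as [|x s IH]; intros Hpq Hi Hp Hq; [destruct Hi|].
  assert (Hmono : forall s', (forall x, In x s' -> p x = true -> q x = true) ->
            (length (filter p s') <= length (filter q s'))%nat).
  { clear. induction s' as [|x s' IH]; intro H; simpl; [lia|].
    destruct (p x) eqn:E1.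
    - rewrite (H x (or_introl eq_refl) E1). simpl. apply le_n_S, IH; intros; apply H; simpl; auto.
    - destruct (q x); simpl; [apply le_S|]; apply IH; intros; apply H; simpl; auto. }
  simpl. destruct Hi as [->|Hi].
  - rewrite Hp, Hq. simpl. apply le_n_S, Hmono. intros; apply Hpq; simpl; auto.
  - destruct (p x) eqn:E1.
    + rewrite (Hpq x (or_introl eq_refl) E1). simpl. apply le_n_S, IH; auto.
      intros; apply Hpq; simpl; auto.
    + destruct (q x); simpl; [apply le_S|]; apply IH; auto; intros; apply Hpq; simpl; auto.
Qed.

Definition fresh (i : nat) (l : list lit) : bool := negb (existsb (fun x => Nat.eqb (var x) i) l).

Lemma count_fresh i b l : fresh i l = true -> count_lit i b l = 0%nat.
Proof.
  unfold fresh, count_lit. induction l as [|x l IH]; simpl; auto.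
  intro H. apply Bool.negb_true_iff in H. apply Bool.orb_false_iff in H as [H1 H2].
  rewrite H1. simpl. apply IH. rewrite H2; auto.
Qed.

Lemma count_cons i b u l : count_lit i b (u :: l) =
  ((if (Nat.eqb (var u) i && Bool.eqb (Defs.pos u) b)%bool then 1 else 0) + count_lit i b l)%nat.
Proof. unfold count_lit; simpl. destruct (_ && _)%bool; reflexivity. Qed.

Lemma MAJl_incr n i l : (1 <= i <= n)%nat -> fresh i l = true ->
  (S (MAJl n l) <= MAJl n (Lit i true :: l))%nat.
Proof.
  intros Hi Hf. unfold MAJl. apply filter_incr with (i := i).
  - intros x _ Hx. unfold majp in *. rewrite !count_cons. cbn [var Defs.pos].
    apply andb_prop in Hx as [H1 H2]. apply Nat.leb_le in H1, H2.
    apply andb_true_intro; split; apply Nat.leb_le; destruct (Nat.eqb i x); simpl; lia.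
  - apply in_seq. lia.
  - unfold majp. rewrite !count_fresh; auto.
  - unfold majp. rewrite !count_cons, !count_fresh by auto. simpl. rewrite Nat.eqb_refl. reflexivity.
Qed.

Lemma fresh_count n l : (n - length l <= length (filter (fun i => fresh i l) (seq 1 n)))%nat.
Proof.
  pose proof (filter_length (fun i => negb (fresh i l)) (seq 1 n)) as H.
  rewrite length_seq in H.
  assert (length (filter (fun i => negb (fresh i l)) (seq 1 n)) <= length l)%nat.
  { rewrite <- (length_map var l). apply NoDup_incl_length.
    - apply NoDup_filter, seq_NoDup.
    - intros i Hi. apply filter_In in Hi as [_ Hi]. unfold fresh in Hi.
      rewrite Bool.negb_involutive in Hi. apply existsb_exists in Hi as [x [Hx Hx']].
      apply Nat.eqb_eq in Hx'. subst. apply in_map; auto. }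
  rewrite (filter_ext (fun x => negb (negb (fresh x l))) (fun i => fresh i l)) in H.
  lia. intro; apply Bool.negb_involutive.
Qed.

Lemma nleaves_len t : nleaves t = length (leaves t).
Proof. induction t; simpl; auto. rewrite length_app; auto. Qed.

Lemma size_leaves t : (size_t t + 1 = 2 * length (leaves t))%nat.
Proof. induction t; simpl; auto. rewrite length_app. lia. Qed.

Lemma MAJ_C n X : (2 * MAJORITY n X <= complexity X + 1)%nat.
Proof.
  rewrite MAJ_l. pose proof (MAJl_le_len n (leaf_list X)).
  destruct X as [t|]; simpl in *; [pose proof (size_leaves t)|]; lia.
Qed.

Lemma MAJ_le_n n X : (MAJORITY n X <= n)%nat.
Proof. apply MAJl_le_n. Qed.

Lemma delete_smaller t i : (complexity (delete_at t i) < size_t t)%nat.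
Proof.
  revert i; induction t as [l|a IHa b IHb]; intro i; simpl; [lia|].
  destruct (Nat.ltb i (nleaves a)).
  - specialize (IHa i). destruct (delete_at a i); simpl in *; lia.
  - specialize (IHb (i - nleaves a)%nat). destruct (delete_at b _); simpl in *; lia.
Qed.

Lemma insert_facts t i u ul : (i < size_t t)%nat ->
  size_t (insert_at t i u ul) = (size_t t + 2)%nat /\
  Permutation (leaves (insert_at t i u ul)) (u :: leaves t).
Proof.
  revert i; induction t as [l|a IHa b IHb]; intros i Hi.
  - simpl in Hi. assert (i = 0%nat) by lia. subst. destruct ul; simpl; split; try lia.
    + auto.
    + apply Permutation_sym, Permutation_cons_append.
  - destruct i as [|j].
    + destruct ul; simpl; split; try lia; auto.
      apply Permutation_sym, Permutation_cons_append.
    + simpl in Hi |- *. destruct (Nat.ltb j (size_t a)) eqn:E.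
      * apply Nat.ltb_lt in E. destruct (IHa j E) as [H1 H2]. simpl. split; [lia|].
        rewrite H2. auto.
      * apply Nat.ltb_ge in E. destruct (IHb (j - size_t a)%nat ltac:(lia)) as [H1 H2].
        simpl. split; [lia|]. rewrite H2. apply Permutation_sym, Permutation_middle.
Qed.

Definition vk (k : nat) : nat := (2 * k - 1)%nat.
Definition covb n (P : list stree) k : bool :=
  existsb (fun Z => (Nat.eqb (MAJORITY n Z) k && Nat.eqb (complexity Z) (vk k))%bool) P.

Lemma covb_iff n P k : covb n P k = true <->
  exists Z, In Z P /\ MAJORITY n Z = k /\ complexity Z = vk k.
Proof.
  unfold covb. rewrite existsb_exists. split.
  - intros [Z [H1 H2]]. apply andb_prop in H2 as [H2 H3].
    apply Nat.eqb_eq in H2, H3. eauto.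
  - intros [Z [H1 [H2 H3]]]. exists Z; split; auto. rewrite H2, H3, !Nat.eqb_refl; auto.
Qed.

Lemma wdom_iff n Y Z : wdom n Y Z = true <->
  (MAJORITY n Z <= MAJORITY n Y /\ complexity Y <= complexity Z)%nat.
Proof.
  unfold wdom. rewrite Bool.andb_true_iff, !Nat.leb_le. tauto.
Qed.

Lemma sdom_iff n Y Z : sdom n Y Z = true <->
  (MAJORITY n Z <= MAJORITY n Y /\ complexity Y <= complexity Z)%nat /\
  (MAJORITY n Z < MAJORITY n Y \/ complexity Y < complexity Z)%nat.
Proof.
  unfold sdom. rewrite Bool.andb_true_iff, wdom_iff, Bool.orb_true_iff, !Nat.ltb_lt. tauto.
Qed.

Lemma vec_wdom n Y Z k : MAJORITY n Z = k -> complexity Z = vk k -> wdom n Y Z = true ->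
  MAJORITY n Y = k /\ complexity Y = vk k.
Proof.
  intros H1 H2 H3. apply wdom_iff in H3. pose proof (MAJ_C n Y). unfold vk in *. lia.
Qed.

Lemma vec_not_sdom n Y Z k : MAJORITY n Y = k -> complexity Y = vk k -> sdom n Z Y = false.
Proof.
  intros H1 H2. destruct (sdom n Z Y) eqn:E; auto. apply sdom_iff in E.
  pose proof (MAJ_C n Z). unfold vk in *. lia.
Qed.

Definition accepted n P Y := existsb (fun Z => sdom n Z Y) P = false.

Lemma accepted_intro n P Y : (forall Z, In Z P -> sdom n Z Y = false) -> accepted n P Y.
Proof.
  intro H. unfold accepted. destruct (existsb _ P) eqn:E; auto.
  apply existsb_exists in E as [Z [HZ HZ']]. rewrite H in HZ'; auto.
Qed.

Lemma update_Y n P Y : accepted n P Y -> In Y (update n P Y).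
Proof. unfold accepted, update. intro H; rewrite H; left; auto. Qed.

Lemma update_keep n P Y Z : In Z P ->
  In Z (update n P Y) \/ (accepted n P Y /\ wdom n Y Z = true).
Proof.
  intro HZ. unfold update, accepted. destruct (existsb _ P) eqn:E; [left; auto|].
  destruct (wdom n Y Z) eqn:W; [right; auto|].
  left; right. apply filter_In. rewrite W; auto.
Qed.

Lemma covb_mono n P Y k : covb n P k = true -> covb n (update n P Y) k = true.
Proof.
  rewrite !covb_iff. intros [Z [HZ [H1 H2]]].
  destruct (update_keep n P Y Z HZ) as [H|[Ha Hw]]; [eauto|].
  exists Y. destruct (vec_wdom n Y Z k H1 H2 Hw). split; auto. apply update_Y; auto.
Qed.

Lemma covb_new n P Y k : MAJORITY n Y = k -> complexity Y = vk k -> covb n (update n P Y) k = true.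
Proof.
  intros H1 H2. apply covb_iff. exists Y. split; auto. apply update_Y, accepted_intro.
  intros; eapply vec_not_sdom; eauto.
Qed.

Lemma update_nonempty n P Y : P <> [] -> update n P Y <> [].
Proof. unfold update. destruct (existsb _ P); auto. discriminate. Qed.

Lemma nodup_map_filter {A B} (f : A -> B) p l : NoDup (map f l) -> NoDup (map f (filter p l)).
Proof.
  induction l as [|x l IH]; simpl; auto. intro H. inversion H; subst.
  destruct (p x); simpl; auto. constructor; auto.
  intro Hin. apply H2. apply in_map_iff in Hin as [y [Hy Hy']]. apply filter_In in Hy' as [Hy' _].
  rewrite <- Hy. apply in_map; auto.
Qed.

Definition Inv n (P : list stree) := P <> [] /\ NoDup (map (MAJORITY n) P).

Lemma Inv_update n P Y : Inv n P -> Inv n (update n P Y).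
Proof.
  intros [H1 H2]. split; [apply update_nonempty; auto|].
  unfold update. destruct (existsb _ P) eqn:E; auto.
  simpl. constructor; [|apply nodup_map_filter; auto].
  intro Hin. apply in_map_iff in Hin as [Z [HZ HZ']]. apply filter_In in HZ' as [HZP HW].
  assert (sdom n Z Y = true).
  { apply Bool.negb_true_iff in HW. apply sdom_iff. 
    assert (~ (MAJORITY n Z <= MAJORITY n Y /\ complexity Y <= complexity Z)%nat)
      by (rewrite <- wdom_iff; congruence). lia. }
  assert (existsb (fun Z => sdom n Z Y) P = true) by (apply existsb_exists; eauto). congruence.
Qed.

Lemma Inv_len n P : Inv n P -> (length P <= S n)%nat.
Proof.
  intros [_ H]. rewrite <- (length_map (MAJORITY n) P), <- (length_seq (S n) 0).
  apply NoDup_incl_length; auto. intros x Hx. apply in_map_iff in Hx as [Z [<- _]].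
  apply in_seq. pose proof (MAJ_le_n n Z). lia.
Qed.

Definition cmin (P : list stree) : nat := fold_right Nat.min (complexity (hd None P)) (map complexity P).

Lemma fold_min_spec d l : (fold_right Nat.min d l <= d)%nat /\
  (forall x, In x l -> fold_right Nat.min d l <= x)%nat /\
  (fold_right Nat.min d l = d \/ In (fold_right Nat.min d l) l).
Proof.
  induction l as [|a l [IH1 [IH2 IH3]]]; simpl; [repeat split; auto; intros x []|].
  repeat split.
  - lia.
  - intros x [->|Hx]; [lia|]. specialize (IH2 x Hx). lia.
  - destruct (Nat.le_ge_cases a (fold_right Nat.min d l)).
    + right; left. lia.
    + rewrite Nat.min_r by auto. destruct IH3; auto.
Qed.

Lemma cmin_spec P : P <> [] ->
  (exists Z, In Z P /\ complexity Z = cmin P) /\ (forall Z, In Z P -> (cmin P <= complexity Z)%nat).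
Proof.
  intro HP. unfold cmin. destruct (fold_min_spec (complexity (hd None P)) (map complexity P)) as [H1 [H2 H3]].
  split.
  - destruct H3 as [H3|H3].
    + destruct P as [|Z P]; [congruence|]. exists Z. simpl in *. auto.
    + apply in_map_iff in H3 as [Z [HZ HZ']]. eauto.
  - intros Z HZ. apply H2, in_map; auto.
Qed.

Lemma cmin_mono n P Y : P <> [] -> (cmin (update n P Y) <= cmin P)%nat.
Proof.
  intro HP. destruct (cmin_spec P HP) as [[Z [HZ HZc]] _].
  destruct (cmin_spec (update n P Y) (update_nonempty n P Y HP)) as [_ H].
  destruct (update_keep n P Y Z HZ) as [H'|[Ha Hw]].
  - rewrite <- HZc. apply H; auto.
  - apply wdom_iff in Hw. specialize (H Y (update_Y n P Y Ha)). lia.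
Qed.

Lemma cmin_dec n P Y : P <> [] -> (complexity Y < cmin P)%nat -> (cmin (update n P Y) < cmin P)%nat.
Proof.
  intros HP HY. destruct (cmin_spec P HP) as [_ H0].
  assert (Ha : accepted n P Y).
  { apply accepted_intro. intros Z HZ. specialize (H0 Z HZ).
    destruct (sdom n Z Y) eqn:E; auto. apply sdom_iff in E. lia. }
  destruct (cmin_spec (update n P Y) (update_nonempty n P Y HP)) as [_ H].
  specialize (H Y (update_Y n P Y Ha)). lia.
Qed.

Fixpoint opt (m : nat) : tree :=
  match m with 0 => Leaf (Lit 1 true) | S m' => Join (Leaf (Lit (S m) true)) (opt m') end.

Lemma opt_vars m x : In x (leaves (opt m)) -> (1 <= var x <= S m)%nat.
Proof.
  induction m as [|m IH]; simpl.
  - intros [<-|[]]; simpl; lia.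
  - intros [<-|H]; simpl; [lia|]. specialize (IH H); lia.
Qed.

Lemma opt_size m : size_t (opt m) = (2 * m + 1)%nat.
Proof. induction m; simpl; lia. Qed.

Lemma fresh_big i l : (forall x, In x l -> var x < i)%nat -> fresh i l = true.
Proof.
  intro H. unfold fresh. apply Bool.negb_true_iff. destruct (existsb _ l) eqn:E; auto.
  apply existsb_exists in E as [x [Hx Hx']]. apply Nat.eqb_eq in Hx'. specialize (H x Hx). lia.
Qed.

Lemma opt_maj n m : (S m <= n)%nat -> (S m <= MAJl n (leaves (opt m)))%nat.
Proof.
  induction m as [|m IH]; intro Hm; simpl.
  - pose proof (MAJl_incr n 1 [] ltac:(lia) eq_refl). lia.
  - pose proof (MAJl_incr n (S (S m)) (leaves (opt m)) ltac:(lia)) as H.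
    assert (fresh (S (S m)) (leaves (opt m)) = true).
    { apply fresh_big. intros x Hx. apply opt_vars in Hx. lia. }
    specialize (H H0). specialize (IH ltac:(lia)). lia.
Qed.

Lemma covers_all n P : (forall k, (k <= n)%nat -> covb n P k = true) -> covers_front n P.
Proof.
  intros Hall Y HwY HpY.
  remember (MAJORITY n Y) as k eqn:Hkd.
  assert (Hk : (k <= n)%nat) by (subst; apply MAJ_le_n).
  assert (HC : complexity Y = vk k).
  { pose proof (MAJ_C n Y) as HM. rewrite <- Hkd in HM. unfold vk.
    destruct (Nat.eq_dec (complexity Y) (2 * k - 1)) as [E|E]; auto. exfalso.
    apply HpY. destruct k as [|m] eqn:Ek.
    - exists None. split; [constructor|]. apply sdom_iff. rewrite <- Hkd. simpl.
      rewrite MAJ_l. simpl. lia.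
    - exists (Some (opt m)). split.
      + unfold wf. simpl. apply Forall_forall. intros x Hx. apply opt_vars in Hx. lia.
      + apply sdom_iff. rewrite <- Hkd. rewrite MAJ_l. simpl. rewrite opt_size.
        pose proof (opt_maj n m ltac:(lia)). lia. }
  destruct (proj1 (covb_iff n P k) (Hall k Hk)) as [Z [HZ [H1 H2]]]. exists Z. split; auto. split; congruence.
Qed.

Lemma not_covers n P : ~ covers_front n P -> exists k, (k <= n)%nat /\ covb n P k = false.
Proof.
  intro H. apply NNPP. intro H'. apply H, covers_all. intros k Hk.
  destruct (covb n P k) eqn:E; auto. exfalso; eauto.
Qed.

Lemma boundary n P k : covb n P 0 = true -> covb n P k = false ->
  exists j, (1 <= j <= k)%nat /\ covb n P (j - 1) = true /\ covb n P j = false.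
Proof.
  intros H0. induction k as [|k IH]; intro Hk; [congruence|].
  destruct (covb n P k) eqn:E.
  - exists (S k). split; [lia|]. simpl. rewrite Nat.sub_0_r. auto.
  - destruct (IH eq_refl) as [j [Hj Hj']]. exists j. split; [lia|auto].
Qed.

Open Scope R_scope.

Definition Aw (n : nat) : R := 3 * exp 1 * INR (S n).
Definition w (n j : nat) : R := 6 * exp 1 * INR n * INR (S n) / INR (S n - j).
Definition Phi2 n (P : list stree) : R := sumf (seq 1 n) (fun j => if covb n P j then 0 else w n j).
Definition g n (P : list stree) : R := Aw n * INR (cmin P) + Phi2 n P.

Lemma exp1_pos : 0 < exp 1.
Proof. apply exp_pos. Qed.

Lemma w_pos n j : (1 <= j <= n)%nat -> 0 < w n j.
Proof.
  intro H. unfold w. pose proof exp1_pos.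
  assert (0 < INR (S n - j)) by (apply lt_0_INR; lia).
  assert (0 < INR n) by (apply lt_0_INR; lia).
  assert (0 < INR (S n)) by (apply lt_0_INR; lia).
  unfold Rdiv. apply Rmult_lt_0_compat; [|apply Rinv_0_lt_compat; auto].
  repeat apply Rmult_lt_0_compat; lra.
Qed.

Lemma sumf_mono {A} (l : list A) f f' : (forall x, In x l -> f' x <= f x) -> sumf l f' <= sumf l f.
Proof.
  induction l as [|x l IH]; intro H; rewrite ?sumf_cons, ?sumf_nil; [lra|].
  assert (f' x <= f x) by (apply H; left; auto).
  assert (sumf l f' <= sumf l f) by (apply IH; intros; apply H; right; auto). lra.
Qed.

Lemma sumf_drop {A} (l : list A) f f' z d : (forall x, In x l -> f' x <= f x) -> In z l ->
  f' z + d <= f z -> sumf l f' + d <= sumf l f.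
Proof.
  induction l as [|x l IH]; intros H Hz Hd; [destruct Hz|]. rewrite !sumf_cons.
  destruct Hz as [->|Hz].
  - assert (sumf l f' <= sumf l f) by (apply sumf_mono; intros; apply H; right; auto). lra.
  - assert (f' x <= f x) by (apply H; left; auto).
    assert (sumf l f' + d <= sumf l f) by (apply IH; auto; intros; apply H; right; auto). lra.
Qed.

Lemma sumf_zero {A} (l : list A) : sumf l (fun _ => 0) = 0.
Proof. induction l; rewrite ?sumf_cons, ?sumf_nil; [auto|rewrite IHl; lra]. Qed.

Lemma sumf_nonneg {A} (l : list A) f : (forall x, In x l -> 0 <= f x) -> 0 <= sumf l f.
Proof.
  intro H. pose proof (sumf_mono l f (fun _ => 0) H). rewrite sumf_zero in H0. lra.
Qed.

Lemma Phi2_nonneg n P : 0 <= Phi2 n P.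
Proof.
  apply sumf_nonneg. intros j Hj. apply in_seq in Hj. destruct (covb n P j); [lra|].
  left; apply w_pos; lia.
Qed.

Lemma Phi2_mono n P Y : Phi2 n (update n P Y) <= Phi2 n P.
Proof.
  apply sumf_mono. intros j Hj. apply in_seq in Hj.
  destruct (covb n P j) eqn:E.
  - rewrite (covb_mono n P Y j E). lra.
  - destruct (covb n (update n P Y) j); [left; apply w_pos; lia|lra].
Qed.

Lemma Phi2_drop n P Y j : (1 <= j <= n)%nat -> covb n P j = false -> covb n (update n P Y) j = true ->
  Phi2 n (update n P Y) + w n j <= Phi2 n P.
Proof.
  intros Hj H1 H2. apply sumf_drop with (z := j).
  - intros i Hi. apply in_seq in Hi.
    destruct (covb n P i) eqn:E.
    + rewrite (covb_mono n P Y i E). lra.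
    + destruct (covb n (update n P Y) i); [left; apply w_pos; lia|lra].
  - apply in_seq; lia.
  - rewrite H1, H2. lra.
Qed.

Lemma Aw_pos n : 0 < Aw n.
Proof. unfold Aw. pose proof exp1_pos. assert (0 < INR (S n)) by (apply lt_0_INR; lia). nra. Qed.

Lemma g_nonneg n P : 0 <= g n P.
Proof. unfold g. pose proof (Aw_pos n). pose proof (pos_INR (cmin P)). pose proof (Phi2_nonneg n P). nra. Qed.

Lemma g_mono n P Y : P <> [] -> g n (update n P Y) <= g n P.
Proof.
  intro HP. unfold g. pose proof (Aw_pos n). pose proof (Phi2_mono n P Y).
  pose proof (le_INR _ _ (cmin_mono n P Y HP)). nra.
Qed.

Lemma nonneg_hvl n X : nnd (hvl n X).
Proof.
  unfold hvl. assert (0 <= / 3) by lra.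
  repeat apply nonneg_app; apply nonneg_scale; auto.
  - destruct X; cbn [op_subst op_insert op_delete]; [|apply nonneg_ret].
    apply nonneg_bind; [apply nonneg_uniform|]. intro; apply nonneg_bind; [apply nonneg_uniform|]. intro; apply nonneg_ret.
  - destruct X; cbn [op_subst op_insert op_delete].
    + apply nonneg_bind; [apply nonneg_uniform|]. intro; apply nonneg_bind; [apply nonneg_uniform|].
      intro; apply nonneg_bind; [apply nonneg_uniform|]. intro; apply nonneg_ret.
    + apply nonneg_bind; [apply nonneg_uniform|]. intro; apply nonneg_ret.
  - destruct X; cbn [op_subst op_insert op_delete]; [|apply nonneg_ret].
    apply nonneg_bind; [apply nonneg_uniform|]. intro; apply nonneg_ret.
Qed.

Lemma mass_hvl n X : mass (hvl n X) <= 1.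
Proof.
  unfold hvl, mass. rewrite !expect_app, !expect_scale. fold (mass (op_subst n X)).
  fold (mass (op_insert n X)). fold (mass (op_delete X)).
  assert (mass (op_subst n X) <= 1).
  { destruct X; cbn [op_subst op_insert op_delete]; [|rewrite mass_ret; lra].
    apply mass_bind; [apply nonneg_uniform|apply mass_uniform|]. intro.
    apply mass_bind; [apply nonneg_uniform|apply mass_uniform|]. intro. rewrite mass_ret; lra. }
  assert (mass (op_insert n X) <= 1).
  { destruct X; cbn [op_subst op_insert op_delete].
    - apply mass_bind; [apply nonneg_uniform|apply mass_uniform|]. intro.
      apply mass_bind; [apply nonneg_uniform|apply mass_uniform|]. intro.
      apply mass_bind; [apply nonneg_uniform|apply mass_uniform|]. intro. rewrite mass_ret; lra.
    - apply mass_bind; [apply nonneg_uniform|apply mass_uniform|]. intro. rewrite mass_ret; lra. }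
  assert (mass (op_delete X) <= 1).
  { destruct X; cbn [op_subst op_insert op_delete]; [|rewrite mass_ret; lra].
    apply mass_bind; [apply nonneg_uniform|apply mass_uniform|]. intro. rewrite mass_ret; lra. }
  lra.
Qed.

Lemma nonneg_ops n X : nnd (op_subst n X) /\ nnd (op_insert n X) /\ nnd (op_delete X).
Proof.
  repeat split.
  - destruct X; cbn [op_subst op_insert op_delete]; [|apply nonneg_ret].
    apply nonneg_bind; [apply nonneg_uniform|]. intro; apply nonneg_bind; [apply nonneg_uniform|]. intro; apply nonneg_ret.
  - destruct X; cbn [op_subst op_insert op_delete].
    + apply nonneg_bind; [apply nonneg_uniform|]. intro; apply nonneg_bind; [apply nonneg_uniform|].
      intro; apply nonneg_bind; [apply nonneg_uniform|]. intro; apply nonneg_ret.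
    + apply nonneg_bind; [apply nonneg_uniform|]. intro; apply nonneg_ret.
  - destruct X; cbn [op_subst op_insert op_delete]; [|apply nonneg_ret].
    apply nonneg_bind; [apply nonneg_uniform|]. intro; apply nonneg_ret.
Qed.

Lemma hvl_ge_ins n X f : (forall y, 0 <= f y) -> / 3 * expect (op_insert n X) f <= expect (hvl n X) f.
Proof.
  intro Hf. destruct (nonneg_ops n X) as [H1 [H2 H3]].
  unfold hvl. rewrite !expect_app, !expect_scale.
  pose proof (expect_nonneg _ f H1 Hf). pose proof (expect_nonneg _ f H3 Hf). lra.
Qed.

Lemma hvl_ge_del n X f : (forall y, 0 <= f y) -> / 3 * expect (op_delete X) f <= expect (hvl n X) f.
Proof.
  intro Hf. destruct (nonneg_ops n X) as [H1 [H2 H3]].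
  unfold hvl. rewrite !expect_app, !expect_scale.
  pose proof (expect_nonneg _ f H1 Hf). pose proof (expect_nonneg _ f H2 Hf). lra.
Qed.

Close Scope R_scope.

Open Scope R_scope.

Lemma expm1 : exp (-1) = / exp 1.
Proof. rewrite <- exp_Ropp. f_equal. Qed.

Lemma event_drift (D : Defs.dist stree) h G d p (b : stree -> bool) :
  nnd D -> mass D <= 1 -> 0 <= G -> 0 <= d ->
  (forall Y, h Y <= G - d * (if b Y then 1 else 0)) ->
  p <= expect D (fun Y => if b Y then 1 else 0) -> 1 <= d * p -> 1 + expect D h <= G.
Proof.
  intros Hn Hm HG Hd Hh Hp Hdp.
  pose proof (expect_mono D h _ Hn Hh) as H. rewrite expect_lin in H.
  assert (0 <= mass D) by (apply expect_nonneg; auto; intros; lra).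
  nra.
Qed.

Section Drift.
Variable n : nat.
Variable mut : stree -> Defs.dist stree.
Hypothesis Hn : (1 <= n)%nat.
Hypothesis Hnn : forall X, nnd (mut X).
Hypothesis Hm : forall X, mass (mut X) <= 1.
Hypothesis Hlow : forall X f, (forall y, 0 <= f y) -> exp (-1) * expect (hvl n X) f <= expect (mut X) f.

Lemma D_nnd P : nnd (bind (uniform P) mut).
Proof. apply nonneg_bind; [apply nonneg_uniform|auto]. Qed.

Lemma D_mass P : mass (bind (uniform P) mut) <= 1.
Proof. apply mass_bind; [apply nonneg_uniform|apply mass_uniform|auto]. Qed.

Lemma pick_lower P Z f : Inv n P -> In Z P -> (forall y, 0 <= f y) ->
  / INR (S n) * (exp (-1) * expect (hvl n Z) f) <= expect (bind (uniform P) mut) f.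
Proof.
  intros HI HZ Hf. rewrite expect_bind.
  eapply Rle_trans; [|apply (unif_one P (fun Z => expect (mut Z) f) Z); auto].
  2: { intro; apply expect_nonneg; auto. }
  pose proof (Hlow Z f Hf). pose proof (Inv_len n P HI).
  assert (0 <= expect (hvl n Z) f) by (apply expect_nonneg; auto; apply nonneg_hvl).
  assert (0 < exp (-1)) by apply exp_pos.
  assert (1 <= length P)%nat by (destruct P; [destruct HZ|simpl; lia]).
  assert (0 < INR (length P)) by (apply lt_0_INR; lia).
  assert (/ INR (S n) <= / INR (length P)) by (apply Rinv_le_contravar; auto; apply le_INR; auto).
  assert (0 < / INR (S n)) by (apply Rinv_0_lt_compat, lt_0_INR; lia).
  assert (0 <= exp (-1) * expect (hvl n Z) f) by nra.
  apply Rle_trans with (/ INR (length P) * (exp (-1) * expect (hvl n Z) f)).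
  - apply Rmult_le_compat_r; auto.
  - rewrite Rmult_comm. apply Rmult_le_compat_r; lra.
Qed.

Lemma nleaves_pos t : (1 <= nleaves t)%nat.
Proof. induction t; simpl; lia. Qed.

Lemma phase1 P : Inv n P -> (1 <= cmin P)%nat ->
  1 + expect (bind (uniform P) mut) (fun Y => g n (update n P Y)) <= g n P.
Proof.
  intros HI Hc. destruct HI as [HP HND] eqn:HI'. clear HI'.
  destruct (cmin_spec P HP) as [[Z [HZ HZc]] _].
  destruct Z as [t|]; [|simpl in HZc; lia].
  set (b := fun Y => Nat.ltb (cmin (update n P Y)) (cmin P)).
  apply (event_drift _ _ _ (Aw n) (/ INR (S n) * (exp (-1) * (/ 3 * 1))) b).
  - apply D_nnd.
  - apply D_mass.
  - apply g_nonneg.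
  - left; apply Aw_pos.
  - intro Y. unfold b. destruct (Nat.ltb _ _) eqn:E.
    + apply Nat.ltb_lt in E. unfold g. pose proof (Phi2_mono n P Y).
      assert (INR (cmin (update n P Y)) + 1 <= INR (cmin P)).
      { rewrite <- S_INR. apply le_INR. lia. }
      pose proof (Aw_pos n). nra.
    + pose proof (g_mono n P Y HP). lra.
  - eapply Rle_trans; [|apply (pick_lower P (Some t)); [split; auto|exact HZ|intro y; destruct (b y); lra]].
    apply Rmult_le_compat_l; [left; apply Rinv_0_lt_compat, lt_0_INR; lia|].
    apply Rmult_le_compat_l; [left; apply exp_pos|].
    eapply Rle_trans; [|apply hvl_ge_del; intro; destruct (b y); lra].
    apply Rmult_le_compat_l; [lra|].
    cbn [op_delete]. rewrite expect_bind. apply unif_all.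
    + pose proof (nleaves_pos t). destruct (nleaves t); [lia|discriminate].
    + intros i _. rewrite expect_ret. unfold b.
      replace (Nat.ltb (cmin (update n P (delete_at t i))) (cmin P)) with true; [lra|].
      symmetry. apply Nat.ltb_lt. apply cmin_dec; auto. rewrite <- HZc. apply delete_smaller.
  - unfold Aw. pose proof exp1_pos. rewrite expm1.
    assert (0 < INR (S n)) by (apply lt_0_INR; lia).
    right. field. split; lra.
Qed.

End Drift.

Close Scope R_scope.

Open Scope R_scope.

Definition goodu n l (u : lit) : bool :=
  (Defs.pos u && Nat.leb 1 (var u) && Nat.leb (var u) n && fresh (var u) l)%bool.

Lemma count_goodu_gen n l s : (forall i, In i s -> 1 <= i <= n)%nat ->
  (length (filter (fun i => fresh i l) s) <=
   length (filter (goodu n l) (flat_map (fun i => [Lit i true; Lit i false]) s)))%nat.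
Proof.
  induction s as [|a s IH]; intro H; simpl; [lia|].
  assert (Ha : (1 <= a <= n)%nat) by (apply H; left; auto).
  assert (IH' := IH (fun i Hi => H i (or_intror Hi))).
  assert (E1 : goodu n l (Lit a true) = fresh a l).
  { unfold goodu. cbn [var Defs.pos].
    replace (Nat.leb 1 a) with true by (symmetry; apply Nat.leb_le; lia).
    replace (Nat.leb a n) with true by (symmetry; apply Nat.leb_le; lia). reflexivity. }
  assert (E2 : goodu n l (Lit a false) = false) by reflexivity.
  cbn [flat_map app filter]. rewrite ?E1, ?E2. destruct (fresh a l); cbn [length]; lia.
Qed.

Lemma count_goodu n l : (n - length l <= length (filter (goodu n l) (Tset n)))%nat.
Proof.
  pose proof (fresh_count n l). pose proof (count_goodu_gen n l (seq 1 n)) as H'.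
  assert (forall i, In i (seq 1 n) -> 1 <= i <= n)%nat by (intros i Hi; apply in_seq in Hi; lia).
  specialize (H' H0). unfold Tset. lia.
Qed.

Lemma Tset_len n : length (Tset n) = (2 * n)%nat.
Proof.
  unfold Tset. rewrite <- (length_seq n 1) at 2. generalize (seq 1 n).
  induction l; simpl; auto. rewrite IHl. lia.
Qed.

Lemma good_vec n P Z Y u j : MAJORITY n Z = (j - 1)%nat -> (1 <= j <= n)%nat ->
  goodu n (leaf_list Z) u = true -> Permutation (leaf_list Y) (u :: leaf_list Z) ->
  complexity Y = vk j -> covb n (update n P Y) j = true.
Proof.
  intros H1 Hj Hg Hp HC. destruct u as [i b]. unfold goodu in Hg. cbn [var Defs.pos] in Hg.
  apply andb_prop in Hg as [Hg Hf]; apply andb_prop in Hg as [Hg Hn']; apply andb_prop in Hg as [Hb H0].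
  subst b. apply Nat.leb_le in H0, Hn'.
  apply covb_new; auto.
  pose proof (MAJl_incr n i (leaf_list Z) ltac:(lia) Hf) as H3.
  rewrite <- MAJ_l, H1 in H3. rewrite MAJ_l, (MAJl_perm n _ _ Hp) in *.
  pose proof (MAJ_C n Y) as H4. rewrite MAJ_l, HC, (MAJl_perm n _ _ Hp) in H4. unfold vk in H4. lia.
Qed.

Lemma len_Z n Z j : MAJORITY n Z = (j - 1)%nat -> complexity Z = vk (j - 1) -> (1 <= j)%nat ->
  length (leaf_list Z) = (j - 1)%nat.
Proof.
  intros H1 H2 Hj. destruct Z as [t|]; simpl in *.
  - pose proof (size_leaves t). unfold vk in H2. destruct t; simpl in *; lia.
  - pose proof (MAJl_le_len n []). rewrite MAJ_l in H1. simpl in *. lia.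
Qed.

Lemma insert_lower n P Z j : MAJORITY n Z = (j - 1)%nat -> complexity Z = vk (j - 1) ->
  (1 <= j <= n)%nat ->
  INR (S n - j) * / INR (2 * n) <= expect (op_insert n Z) (fun Y => if covb n (update n P Y) j then 1 else 0).
Proof.
  intros H1 H2 Hj.
  pose proof (len_Z n Z j H1 H2 ltac:(lia)) as HL.
  pose proof (count_goodu n (leaf_list Z)) as HC. rewrite HL in HC.
  assert (Hc : INR (S n - j) * / INR (2 * n) <=
               INR (length (filter (goodu n (leaf_list Z)) (Tset n))) * / INR (length (Tset n))).
  { rewrite Tset_len. apply Rmult_le_compat_r.
    - left; apply Rinv_0_lt_compat, lt_0_INR; lia.
    - apply le_INR. lia. }
  eapply Rle_trans; [exact Hc|]. clear Hc.
  destruct Z as [t|].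
  - cbn [op_insert]. rewrite expect_bind. apply unif_all.
    + destruct t; simpl; discriminate.
    + intros i Hi. apply in_seq in Hi. rewrite expect_bind. apply unif_count.
      * intro; apply expect_nonneg; [apply nonneg_bind; [apply nonneg_uniform|intro; apply nonneg_ret]|].
        intro; destruct (covb _ _ _); lra.
      * intros u Hu. rewrite expect_bind. apply unif_all; [discriminate|].
        intros ul _. rewrite expect_ret.
        destruct (insert_facts t i u ul ltac:(lia)) as [Hs Hp].
        rewrite (good_vec n P (Some t) (Some (insert_at t i u ul)) u j); auto; [lra|].
        simpl complexity. rewrite Hs. simpl in H2. unfold vk in *.
        assert (1 <= size_t t)%nat by (destruct t; simpl; lia). clear -H2 H. revert H2 H. generalize (size_t t). intros s H2 H. lia.
  - cbn [op_insert]. rewrite expect_bind. apply unif_count.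
    + intro; rewrite expect_ret; destruct (covb _ _ _); lra.
    + intros u Hu. rewrite expect_ret.
      rewrite (good_vec n P None (Some (Leaf u)) u j); auto; [lra|].
      simpl. unfold vk. pose proof (MAJl_le_len n []). rewrite MAJ_l in H1. simpl in *. lia.
Qed.

Close Scope R_scope.

Open Scope R_scope.

Section Drift2.
Variable n : nat.
Variable mut : stree -> Defs.dist stree.
Hypothesis Hn : (1 <= n)%nat.
Hypothesis Hnn : forall X, nnd (mut X).
Hypothesis Hm : forall X, mass (mut X) <= 1.
Hypothesis Hlow : forall X f, (forall y, 0 <= f y) -> exp (-1) * expect (hvl n X) f <= expect (mut X) f.

Lemma phase2 P : Inv n P -> cmin P = 0%nat -> ~ covers_front n P ->
  1 + expect (bind (uniform P) mut) (fun Y => g n (update n P Y)) <= g n P.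
Proof.
  intros HI Hc Hnc. destruct HI as [HP HND] eqn:HI'. clear HI'.
  destruct (cmin_spec P HP) as [[Z0 [HZ0 HZ0c]] _].
  assert (H0 : covb n P 0 = true).
  { apply covb_iff. exists Z0. pose proof (MAJ_C n Z0). rewrite HZ0c, Hc in *.
    unfold vk. split; auto. split; lia. }
  destruct (not_covers n P Hnc) as [k [Hk Hk']].
  destruct (boundary n P k H0 Hk') as [j [Hj [Hj1 Hj2]]].
  apply covb_iff in Hj1 as [Z [HZ [HZm HZc]]].
  set (b := fun Y => covb n (update n P Y) j).
  apply (event_drift _ _ _ (w n j)
     (/ INR (S n) * (exp (-1) * (/ 3 * (INR (S n - j) * / INR (2 * n))))) b).
  - apply (D_nnd mut Hnn).
  - apply (D_mass mut Hm).
  - apply g_nonneg.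
  - left; apply w_pos; lia.
  - intro Y. unfold b. destruct (covb n (update n P Y) j) eqn:E.
    + unfold g. pose proof (Phi2_drop n P Y j ltac:(lia) Hj2 E).
      pose proof (le_INR _ _ (cmin_mono n P Y HP)). pose proof (Aw_pos n). nra.
    + pose proof (g_mono n P Y HP). lra.
  - eapply Rle_trans; [|apply (pick_lower n mut Hn Hnn Hlow P Z); [split; auto|exact HZ|intro y; destruct (b y); lra]].
    apply Rmult_le_compat_l; [left; apply Rinv_0_lt_compat, lt_0_INR; lia|].
    apply Rmult_le_compat_l; [left; apply exp_pos|].
    eapply Rle_trans; [|apply hvl_ge_ins; intro; destruct (b y); lra].
    apply Rmult_le_compat_l; [lra|].
    apply insert_lower; auto. lia.
  - unfold w. pose proof exp1_pos. rewrite expm1, mult_INR.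
    assert (0 < INR (S n)) by (apply lt_0_INR; lia).
    assert (0 < INR n) by (apply lt_0_INR; lia).
    assert (0 < INR (S n - j)) by (apply lt_0_INR; lia).
    right. simpl (INR 2). field. repeat split; lra.
Qed.

Lemma step P : Inv n P -> ~ covers_front n P ->
  1 + expect (bind (uniform P) mut) (fun Y => g n (update n P Y)) <= g n P.
Proof.
  intros HI Hnc. destruct (cmin P) eqn:E.
  - apply phase2; auto.
  - apply (phase1 n mut Hn Hnn Hm Hlow); auto. lia.
Qed.

Lemma sumf_S (N : nat) (f : nat -> R) : sumR (S N) f = f 0%nat + sumR N (fun t => f (S t)).
Proof.
  unfold sumR. cbn [seq fold_right]. f_equal. rewrite <- seq_shift.
  generalize (seq 0 N). induction l; simpl; auto. rewrite IHl; auto.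
Qed.

Lemma sumR_expect (N : nat) (D : Defs.dist stree) (F : nat -> stree -> R) :
  sumR N (fun t => expect D (F t)) = expect D (fun y => sumR N (fun t => F t y)).
Proof.
  unfold sumR. generalize (seq 0 N). induction l; simpl.
  - rewrite expect_zero; auto.
  - rewrite IHl. rewrite <- expect_plus. auto.
Qed.

Lemma sumR_zero N : sumR N (fun _ => 0) = 0.
Proof. unfold sumR. generalize (seq 0 N). induction l; simpl; auto. rewrite IHl; lra. Qed.

Lemma covers_frontb_true P : covers_frontb n P = true <-> covers_front n P.
Proof.
  unfold covers_frontb. destruct (excluded_middle_informative _); split; auto; discriminate.
Qed.

Lemma sumR_ext N f f' : (forall t, f t = f' t) -> sumR N f = sumR N f'.
Proof. intro H. unfold sumR. generalize (seq 0 N). induction l; simpl; auto. rewrite IHl, H; auto. Qed.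

Theorem drift N : forall P, Inv n P -> sumR N (fun t => not_done mut n t P) <= g n P.
Proof.
  induction N as [|N IH]; intros P HI.
  - unfold sumR; simpl. apply g_nonneg.
  - rewrite sumf_S. destruct (covers_frontb n P) eqn:E.
    + assert (H : forall t, not_done mut n t P = 0) by (intro t; destruct t; simpl; rewrite E; auto).
      rewrite H, (sumR_ext N _ (fun _ => 0)), sumR_zero; [|intro; apply H].
      pose proof (g_nonneg n P). lra.
    + assert (Hnc : ~ covers_front n P) by (rewrite <- covers_frontb_true; congruence).
      assert (H0 : not_done mut n 0 P = 1) by (simpl; rewrite E; auto).
      rewrite H0.
      rewrite (sumR_ext N _ (fun t => expect (bind (uniform P) mut) (fun Y => not_done mut n t (update n P Y)))).
      2: { intro t. simpl. rewrite E. auto. }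
      rewrite sumR_expect.
      pose proof (step P HI Hnc).
      assert (expect (bind (uniform P) mut) (fun y => sumR N (fun t => not_done mut n t (update n P y)))
              <= expect (bind (uniform P) mut) (fun Y => g n (update n P Y))).
      { apply expect_mono; [apply (D_nnd mut Hnn)|]. intro Y. apply IH. apply Inv_update; auto. }
      lra.
Qed.
End Drift2.

Close Scope R_scope.

Open Scope R_scope.

Lemma sumf_map {A B} (h : A -> B) l f : sumf (map h l) f = sumf l (fun x => f (h x)).
Proof. induction l; simpl map; rewrite ?sumf_cons, ?sumf_nil; auto. rewrite IHl; auto. Qed.

Lemma sumf_app {A} (l1 l2 : list A) f : sumf (l1 ++ l2) f = sumf l1 f + sumf l2 f.
Proof. induction l1; simpl app; rewrite ?sumf_nil, ?sumf_cons; [lra|]. rewrite IHl1; lra. Qed.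

Definition Hm (m : nat) : R := sumf (seq 1 m) (fun j => / INR (S m - j)).

Lemma Hm_S m : Hm (S m) = / INR (S m) + Hm m.
Proof.
  unfold Hm. cbn [seq]. rewrite sumf_cons. f_equal.
  rewrite <- seq_shift, sumf_map. auto.
Qed.

Lemma ln_step m : (1 <= m)%nat -> / INR (S m) <= ln (INR (S m)) - ln (INR m).
Proof.
  intro Hm1. assert (0 < INR m) by (apply lt_0_INR; lia).
  rewrite S_INR.
  assert (H1 : INR m / (INR m + 1) <= exp (- / (INR m + 1))).
  { pose proof (exp_ineq1_le (- / (INR m + 1))).
    replace (INR m / (INR m + 1)) with (1 + - / (INR m + 1)); [lra|field; lra]. }
  assert (H2 : ln (INR m / (INR m + 1)) = ln (INR m) - ln (INR m + 1)).
  { unfold Rdiv. rewrite ln_mult, ln_Rinv; try lra. apply Rinv_0_lt_compat; lra. }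
  destruct (Rle_or_lt (ln (INR m / (INR m + 1))) (- / (INR m + 1))) as [H3|H3]; [lra|].
  apply exp_increasing in H3. rewrite exp_ln in H3; [lra|].
  apply Rdiv_lt_0_compat; lra.
Qed.

Lemma Hm_bound m : (1 <= m)%nat -> Hm m <= 1 + ln (INR m).
Proof.
  induction m as [|m IH]; intro H; [lia|].
  destruct m as [|m].
  - unfold Hm. simpl seq. rewrite sumf_cons, sumf_nil. simpl. rewrite ln_1. lra.
  - rewrite Hm_S. pose proof (IH ltac:(lia)). pose proof (ln_step (S m) ltac:(lia)). lra.
Qed.

Lemma Phi2_bound n P : (1 <= n)%nat -> Phi2 n P <= 6 * exp 1 * INR n * INR (S n) * Hm n.
Proof.
  intro Hn. unfold Phi2, Hm.
  apply Rle_trans with (sumf (seq 1 n) (fun j => w n j)).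
  - apply sumf_mono. intros j Hj. apply in_seq in Hj. destruct (covb n P j); [|lra].
    left; apply w_pos; lia.
  - generalize (seq 1 n). induction l; rewrite ?sumf_cons, ?sumf_nil; [lra|].
    unfold w at 1. unfold Rdiv. lra.
Qed.

Lemma cmin_single X : cmin [X] = complexity X.
Proof. unfold cmin. simpl. apply Nat.min_id. Qed.

Lemma g_init_bound n X0 : (2 <= n)%nat ->
  g n [X0] <= 200 * (INR n * INR (complexity X0) + INR n ^ 2 * ln (INR n)).
Proof.
  intro Hn. unfold g. rewrite cmin_single.
  pose proof (Phi2_bound n [X0] ltac:(lia)). pose proof (Hm_bound n ltac:(lia)).
  pose proof exp_le_3. pose proof exp1_pos.
  assert (Hn2 : 2 <= INR n) by (replace 2 with (INR 2) by (simpl; lra); apply le_INR; auto).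
  assert (Hln : / 2 <= ln (INR n)).
  { pose proof ln_lt_2. destruct (Req_dec (INR n) 2) as [E|E]; [rewrite E; lra|].
    pose proof (ln_increasing 2 (INR n) ltac:(lra) ltac:(lra)). lra. }
  set (C := INR (complexity X0)). assert (0 <= C) by apply pos_INR.
  set (x := INR n). set (L := ln x). fold x in H, H0, Hn2. fold L in H0, Hln.
  unfold Aw. rewrite S_INR. fold x. rewrite S_INR in H. fold x in H.
  assert (0 <= Hm n) by (unfold Hm; apply sumf_nonneg; intros; left; apply Rinv_0_lt_compat, lt_0_INR; apply in_seq in H4; lia).
  set (h := Hm n) in *.
  fold x L in Hln.
  assert (B1 : exp 1 * (x + 1) <= 3 * (x + 1)) by (apply Rmult_le_compat_r; lra).
  assert (A1 : 3 * exp 1 * (x + 1) * C <= 18 * x * C).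
  { apply Rmult_le_compat_r; auto. lra. }
  assert (A2 : 6 * exp 1 * x * (x + 1) <= 36 * x * x).
  { assert (6 * (exp 1 * (x + 1)) * x <= 6 * (3 * (x + 1)) * x) by (apply Rmult_le_compat_r; lra). nra. }
  assert (A3 : h <= 3 * L) by lra.
  assert (A4 : 6 * exp 1 * x * (x + 1) * h <= 36 * x * x * (3 * L)).
  { apply Rle_trans with (36 * x * x * h). apply Rmult_le_compat_r; auto.
    apply Rmult_le_compat_l; nra. }
  simpl pow. nra.
Qed.

Close Scope R_scope.

Open Scope R_scope.

Lemma expm1_le1 : exp (-1) <= 1.
Proof.
  rewrite expm1. pose proof (exp_ineq1_le 1). 
  replace 1 with (/ 1) at 2 by lra. apply Rinv_le_contravar; lra.
Qed.

Lemma expm1_pos : 0 < exp (-1).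
Proof. apply exp_pos. Qed.

Lemma expect_flat_map {A B} (F : A -> Defs.dist B) s f :
  expect (flat_map F s) f = sumf s (fun j => expect (F j) f).
Proof. induction s; simpl; rewrite ?sumf_nil, ?sumf_cons; auto. rewrite expect_app, IHs; auto. Qed.

Lemma hvl_iter_nnd n k X : nnd (hvl_iter n k X).
Proof.
  revert X; induction k; intro X; cbn [hvl_iter]; [apply nonneg_ret|].
  apply nonneg_bind; [apply nonneg_hvl|auto].
Qed.

Lemma hvl_iter_mass n k X : mass (hvl_iter n k X) <= 1.
Proof.
  revert X; induction k; intro X; cbn [hvl_iter]; [rewrite mass_ret; lra|].
  apply mass_bind; [apply nonneg_hvl|apply mass_hvl|auto].
Qed.

Lemma sumf_scal {A} (l : list A) c f : sumf l (fun j => c * f j) = c * sumf l f.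
Proof. induction l; rewrite ?sumf_nil, ?sumf_cons; [lra|]. rewrite IHl; lra. Qed.

Lemma sumf_fact m : sumf (seq 0 (S m)) (fun j => / INR (fact j)) = sum_f_R0 (fun i => / INR (fact i) * 1 ^ i) m.
Proof.
  induction m.
  - simpl seq. rewrite sumf_cons, sumf_nil. simpl. lra.
  - rewrite seq_S, sumf_app, IHm. cbn [sum_f_R0]. rewrite pow1. simpl seq.
    rewrite sumf_cons, sumf_nil, Nat.add_0_l. lra.
Qed.

Lemma expsum k : sum_f_R0 (fun i => / INR (fact i) * 1 ^ i) k <= exp 1.
Proof.
  apply (growing_ineq (fun k => sum_f_R0 (fun i => / INR (fact i) * 1 ^ i) k)).
  - intro m. cbn [sum_f_R0]. rewrite pow1. assert (0 < / INR (fact (S m))) by (apply Rinv_0_lt_compat, INR_fact_lt_0). lra.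
  - unfold exp. destruct (exist_exp 1) as [l H]. simpl. exact H.
Qed.

Lemma multi_nnd n K X : nnd (mut_multi_trunc n K X).
Proof.
  unfold mut_multi_trunc. generalize (seq 0 K). induction l; simpl; [constructor|].
  apply nonneg_app; auto. apply nonneg_scale; [|exact (hvl_iter_nnd n (S a) X)].
  unfold Rdiv. pose proof expm1_pos. assert (0 < / INR (fact a)) by (apply Rinv_0_lt_compat, INR_fact_lt_0). nra.
Qed.

Lemma multi_mass n K X : mass (mut_multi_trunc n K X) <= 1.
Proof.
  unfold mass, mut_multi_trunc. rewrite expect_flat_map.
  apply Rle_trans with (sumf (seq 0 K) (fun j => exp (-1) * / INR (fact j))).
  - apply sumf_mono. intros j _. rewrite expect_scale. fold (mass (hvl_iter n (S j) X)).
    pose proof (hvl_iter_mass n (S j) X). pose proof expm1_pos.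
    assert (0 < / INR (fact j)) by (apply Rinv_0_lt_compat, INR_fact_lt_0).
    unfold Rdiv. rewrite <- (Rmult_1_r (exp (-1) * / INR (fact j))) at 2. apply Rmult_le_compat_l; auto. nra.
  - rewrite sumf_scal. destruct K.
    + simpl seq. rewrite sumf_nil. lra.
    + rewrite sumf_fact. pose proof (expsum K). rewrite expm1. pose proof exp1_pos.
      apply Rle_trans with (/ exp 1 * exp 1). apply Rmult_le_compat_l; auto.
      left; apply Rinv_0_lt_compat; auto. rewrite Rinv_l; lra.
Qed.

Lemma multi_low n K X f : (1 <= K)%nat -> (forall y, 0 <= f y) ->
  exp (-1) * expect (hvl n X) f <= expect (mut_multi_trunc n K X) f.
Proof.
  intros HK Hf. destruct K; [lia|]. unfold mut_multi_trunc. rewrite expect_flat_map.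
  cbn [seq]. rewrite sumf_cons, expect_scale.
  assert (0 <= sumf (seq 1 K) (fun j => expect (scale (exp (-1) / INR (fact j)) (hvl_iter n (S j) X)) f)).
  { apply sumf_nonneg. intros j _. apply expect_nonneg; auto.
    apply nonneg_scale; [|apply hvl_iter_nnd]. unfold Rdiv. pose proof expm1_pos.
    assert (0 < / INR (fact j)) by (apply Rinv_0_lt_compat, INR_fact_lt_0). nra. }
  assert (E : expect (hvl_iter n 1 X) f = expect (hvl n X) f).
  { simpl. rewrite expect_bind. apply expect_ext. intro; apply expect_ret. }
  rewrite E. simpl (INR (fact 0)). unfold Rdiv. rewrite Rinv_1, Rmult_1_r. lra.
Qed.

Theorem theorem5 :
  exists c : R, 0 < c /\
    forall n : nat, (2 <= n)%nat ->
    forall X0 : stree, wf n X0 ->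
      let B := c * (INR n * INR (complexity X0) + INR n ^ 2 * ln (INR n)) in
      (forall N : nat, sumR N (fun t => not_done (mut_single n) n t (X0 :: nil)) <= B) /\
      (forall K N : nat, sumR N (fun t => not_done (mut_multi_trunc n K) n t (X0 :: nil)) <= B).
Proof.
  exists 200. split; [lra|]. intros n Hn X0 _ B.
  assert (HI : Inv n [X0]) by (split; [discriminate|repeat constructor; intros []]).
  pose proof (g_init_bound n X0 Hn) as Hg. fold B in Hg.
  split.
  - intro N. eapply Rle_trans; [|exact Hg]. apply drift; auto; [lia| | |].
    + apply nonneg_hvl.
    + apply mass_hvl.
    + intros X f Hf. unfold mut_single. pose proof expm1_le1.
      assert (0 <= expect (hvl n X) f) by (apply expect_nonneg; auto; apply nonneg_hvl).
      pose proof expm1_pos. nra.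
  - intros K N. destruct K as [|K].
    + assert (HB : 1 <= B).
      { unfold B. assert (Hn2 : 2 <= INR n) by (replace 2 with (INR 2) by (simpl; lra); apply le_INR; auto).
        pose proof ln_lt_2.
        assert (/ 2 <= ln (INR n)).
        { destruct (Req_dec (INR n) 2) as [E|E]; [rewrite E; lra|].
          pose proof (ln_increasing 2 (INR n) ltac:(lra) ltac:(lra)). lra. }
        pose proof (pos_INR (complexity X0)). simpl pow.
        assert (0 <= INR n * INR (complexity X0)) by nra.
        assert (4 <= INR n * (INR n * 1)) by nra. nra. }
      destruct N; [unfold sumR; simpl; lra|].
      rewrite sumf_S.
      rewrite (sumR_ext N _ (fun _ => 0)), sumR_zero.
      * simpl. destruct (covers_frontb n [X0]); lra.
      * intro t. simpl. destruct (covers_frontb n [X0]); auto.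
    + eapply Rle_trans; [|exact Hg]. apply drift; auto; [lia| | |].
      * apply multi_nnd.
      * apply multi_mass.
      * intros X f Hf. apply multi_low; auto. lia.
Qed.

Close Scope R_scope.
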